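(* Let $n \ge 2$ and let $\mathcal{P} = \langle x, y \mid x^n y^{-2}, R \rangle$, with $R \in F(x,y)$, be a presentation of a group isomorphic to $Q_{4n}$. Then at least one of the following holds: (i) $x \mapsto x$, $y \mapsto y$ induces a group isomorphism from the group presented by $\mathcal{P}$ to $Q_{4n}$; (ii) $x \mapsto xy$, $y \mapsto y$ induces a group isomorphism from the group presented by $\mathcal{P}$ to $Q_{4n}$. Furthermore, if $n = 2$ or $n \not\equiv 2 \pmod 4$, then (i) holds.
   Context: $Q_{4n}$ is identified with $\langle x, y \mid x^n y^{-2}, xyxy^{-1} \rangle$ and $F(x,y)$ is the free group on $x,y$. *)

(* Defs.v *)
From mathcomp Require Import all_boot.
Set Implicit Arguments. Unset Strict Implicit. Unset Printing Implicit Defensive.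

(* A letter: (generator, inverted?). Generator false = x, true = y. *)
Definition letter := (bool * bool)%type.
Definition word := seq letter.

Definition gx : word := [:: (false, false)].
Definition gy : word := [:: (true, false)].

Definition inv_letter (a : letter) : letter := (a.1, ~~ a.2).
Definition inv_word (w : word) : word := rev (map inv_letter w).

Inductive rel_eq (rels : seq word) : word -> word -> Prop :=
| re_refl u : rel_eq rels u u
| re_sym u v : rel_eq rels u v -> rel_eq rels v u
| re_trans u v w : rel_eq rels u v -> rel_eq rels v w -> rel_eq rels u w
| re_cancel u v a : rel_eq rels (u ++ [:: a; inv_letter a] ++ v) (u ++ v)
| re_rel u v r : r \in rels -> rel_eq rels (u ++ r ++ v) (u ++ v).

Definition pres_iso (rels1 rels2 : seq word) : Prop :=
  exists f : word -> word,
    [/\ (forall u v, rel_eq rels1 u v -> rel_eq rels2 (f u) (f v)),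
        (forall u v, rel_eq rels2 (f (u ++ v)) (f u ++ f v)),
        (forall u v, rel_eq rels2 (f u) (f v) -> rel_eq rels1 u v) &
        (forall w, exists u, rel_eq rels2 (f u) w)].

Definition subst (s : bool -> word) (w : word) : word :=
  flatten (map (fun a : letter => if a.2 then inv_word (s a.1) else s a.1) w).

Definition induces_iso (rels1 rels2 : seq word) (s : bool -> word) : Prop :=
  [/\ (forall u v, rel_eq rels1 u v -> rel_eq rels2 (subst s u) (subst s v)),
      (forall u v, rel_eq rels2 (subst s u) (subst s v) -> rel_eq rels1 u v) &
      (forall w, exists u, rel_eq rels2 (subst s u) w)].

(* x^n y^-2 *)
Definition rel_xn_ym2 (n : nat) : word :=
  nseq n (false, false) ++ [:: (true, true); (true, true)].
(* x y x y^-1 *)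
Definition rel_xyxyinv : word :=
  [:: (false, false); (true, false); (false, false); (true, true)].

Definition Q4n_rels (n : nat) : seq word := [:: rel_xn_ym2 n; rel_xyxyinv].
Definition P_rels (n : nat) (R : word) : seq word := [:: rel_xn_ym2 n; R].

Definition s_id (b : bool) : word := if b then gy else gx.
Definition s_xy (b : bool) : word := if b then gy else gx ++ gy.

(* Main.v *)
Require Import Defs.
From mathcomp Require Import all_boot all_order all_algebra.
From mathcomp Require Import ring zify.
From Stdlib Require Import Lia.
From Stdlib Require Import Setoid Morphisms.
Set Implicit Arguments. Unset Strict Implicit. Unset Printing Implicit Defensive.
Import GRing.Theory.

Section RelEq.
Variable rels : seq word.
Local Notation "u ~~~ v" := (rel_eq rels u v) (at level 70).

#[local] Instance rel_eq_equiv : Equivalence (rel_eq rels).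
Proof. split; [exact: re_refl| exact: re_sym| exact: re_trans]. Qed.

Lemma rel_eq_ctx p q u v : u ~~~ v -> (p ++ u ++ q) ~~~ (p ++ v ++ q).
Proof.
elim=> {u v} [u|u v _ IH|u v w _ IH1 _ IH2|u v a|u v r hr].
- reflexivity.
- by symmetry.
- by transitivity (p ++ v ++ q).
- have := re_cancel rels (p ++ u) (v ++ q) a. by rewrite -!catA.
- have := re_rel (p ++ u) (v ++ q) hr. by rewrite -!catA.
Qed.

#[local] Instance cat_proper : Proper (rel_eq rels ==> rel_eq rels ==> rel_eq rels) cat.
Proof.
move=> u u' hu v v' hv. transitivity (u' ++ v).
  exact: (rel_eq_ctx [::] v hu).
have := rel_eq_ctx u' [::] hv. by rewrite !cats0.
Qed.

#[local] Instance cons_proper a : Proper (rel_eq rels ==> rel_eq rels) (cons a).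
Proof. move=> u v h. change (([:: a] ++ u) ~~~ ([:: a] ++ v)). rewrite h; reflexivity. Qed.

Lemma rel_nil r : r \in rels -> r ~~~ [::].
Proof. move=> h; have := re_rel [::] [::] h; by rewrite cats0. Qed.

Lemma cancel2 a : [:: a; inv_letter a] ~~~ [::].
Proof. exact: (re_cancel rels [::] [::] a). Qed.

Lemma inv_letterK a : inv_letter (inv_letter a) = a.
Proof. by case: a => b []. Qed.

Lemma cancel2' a : [:: inv_letter a; a] ~~~ [::].
Proof. have := cancel2 (inv_letter a); by rewrite inv_letterK. Qed.

Lemma inv_word_cons a w : inv_word (a :: w) = inv_word w ++ [:: inv_letter a].
Proof. by rewrite /inv_word /= rev_cons cats1. Qed.

Lemma inv_wordK w : inv_word (inv_word w) = w.
Proof. rewrite /inv_word map_rev revK -map_comp map_id_in //. by move=> a _; rewrite /= inv_letterK. Qed.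

Lemma inv_word_r w : (w ++ inv_word w) ~~~ [::].
Proof.
elim: w => [|a w IH] /=; first reflexivity.
rewrite inv_word_cons catA. change ((([:: a] ++ (w ++ inv_word w)) ++ [:: inv_letter a]) ~~~ [::]).
rewrite IH /=. exact: cancel2.
Qed.

Lemma inv_word_l w : (inv_word w ++ w) ~~~ [::].
Proof. have := inv_word_r (inv_word w); by rewrite inv_wordK. Qed.

Lemma cancel_r u v w : (u ++ w) ~~~ (v ++ w) -> u ~~~ v.
Proof.
move=> h. transitivity ((u ++ w) ++ inv_word w).
  by rewrite -catA inv_word_r cats0; reflexivity.
rewrite h -catA inv_word_r cats0; reflexivity.
Qed.

Lemma cancel_l u v w : (w ++ u) ~~~ (w ++ v) -> u ~~~ v.
Proof.
move=> h. transitivity (inv_word w ++ (w ++ u)).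
  by rewrite catA inv_word_l; reflexivity.
rewrite h catA inv_word_l; reflexivity.
Qed.

End RelEq.
#[export] Existing Instance rel_eq_equiv.
#[export] Existing Instance cat_proper.
#[export] Existing Instance cons_proper.


Local Open Scope ring_scope.
Section Model.
Variable n : nat.
Hypothesis n2 : (2 <= n)%N.
Local Notation Z := 'Z_(n.*2).
Definition NZ : Z := n%:R.
Local Notation N := NZ.
Lemma m_gt1 : (1 < n.*2)%N. Proof. by rewrite -addnn; apply: leq_trans n2 (leq_addl _ _). Qed.
Lemma NN : N + N = 0.
Proof. by rewrite /NZ -natrD addnn pchar_Zp // m_gt1. Qed.
Lemma addNN (x : Z) : x = x + (N + N). Proof. by rewrite NN addr0. Qed.

Definition M := (Z * bool)%type.
Definition mulM (p q : M) : M :=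
  (p.1 + (if p.2 then - q.1 else q.1) + (if p.2 && q.2 then N else 0), p.2 (+) q.2).
Definition oneM : M := (0, false).
Definition invM (p : M) : M := if p.2 then (p.1 + N, true) else (- p.1, false).

Ltac zsolve := first [ring | (apply: etrans (addNN _) _; ring)
  | (apply: esym; apply: etrans (addNN _) _; ring)
  | (apply: etrans (addNN _) _; apply: etrans (addNN _) _; ring)
  | (apply: esym; apply: etrans (addNN _) _; apply: etrans (addNN _) _; ring)].

Lemma mulMA p q r : mulM p (mulM q r) = mulM (mulM p q) r.
Proof. case: p q r => [i [] ] [j [] ] [k [] ]; rewrite /mulM /=; congr pair; zsolve. Qed.
Lemma mul1M p : mulM oneM p = p.
Proof. case: p => [i [] ]; rewrite /mulM /=; congr pair; zsolve. Qed.
Lemma mulM1 p : mulM p oneM = p.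
Proof. case: p => [i [] ]; rewrite /mulM /=; congr pair; zsolve. Qed.
Lemma mulVM p : mulM (invM p) p = oneM.
Proof. case: p => [i [] ]; rewrite /mulM /=; congr pair; zsolve. Qed.
Lemma mulMV p : mulM p (invM p) = oneM.
Proof. case: p => [i [] ]; rewrite /mulM /=; congr pair; zsolve. Qed.
Lemma invMK p : invM (invM p) = p.
Proof. case: p => [i [] ]; rewrite /invM /=; congr pair; zsolve. Qed.
Definition XM : M := (1, false).
Definition YM : M := (0, true).
Definition genM (b : bool) : M := if b then YM else XM.
Definition lv (a : letter) : M := if a.2 then invM (genM a.1) else genM a.1.
Definition ev (w : word) : M := foldr (fun a acc => mulM (lv a) acc) oneM w.

Lemma invM_mul p q : invM (mulM p q) = mulM (invM q) (invM p).
Proof. case: p q => [i [] ] [j [] ]; rewrite /mulM /invM /=; congr pair; zsolve. Qed.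

Lemma ev_cat u v : ev (u ++ v) = mulM (ev u) (ev v).
Proof. elim: u => [|a u IH] /=; first by rewrite mul1M. by rewrite IH mulMA. Qed.

Lemma lv_inv a : lv (inv_letter a) = invM (lv a).
Proof. case: a => b [] //=; by rewrite /lv /= invMK. Qed.

Lemma ev_inv w : ev (inv_word w) = invM (ev w).
Proof.
elim: w => [|a w IH]; first by rewrite /= /invM /= oppr0.
by rewrite inv_word_cons ev_cat IH /= lv_inv mulM1 invM_mul.
Qed.

Definition xl : letter := (false, false).
Definition xi : letter := (false, true).
Definition yl : letter := (true, false).
Definition yi : letter := (true, true).
Definition xs k : word := nseq k xl.

Lemma ev_xs k : ev (xs k) = (k%:R, false).
Proof.
elim: k => [|k IH] //=. rewrite IH /mulM /=; congr pair. by rewrite addr0 [RHS]mulrS.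
Qed.

Lemma ev_rel r : r \in Q4n_rels n -> ev r = oneM.
Proof.
rewrite !inE => /orP [] /eqP ->.
- rewrite /rel_xn_ym2 ev_cat ev_xs /mulM /oneM /= -/NZ; congr pair; zsolve.
- rewrite /ev /= /lv /= /mulM /oneM /=; congr pair; zsolve.
Qed.

Lemma sound u v : rel_eq (Q4n_rels n) u v -> ev u = ev v.
Proof.
elim=> {u v} [//|u v _ -> //|u v w _ -> _ -> //|u v a|u v r /ev_rel hr].
- rewrite !ev_cat; have -> : ev [:: a; inv_letter a] = oneM by rewrite /ev /= lv_inv mulM1 mulMV.
  by rewrite mul1M.
- by rewrite !ev_cat hr mul1M.
Qed.

Definition nf (p : M) : word := xs (val p.1) ++ (if p.2 then [:: yl] else [::]).

Lemma ev_nf p : ev (nf p) = p.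
Proof.
case: p => [i e]; rewrite /nf ev_cat ev_xs natr_Zp /=.
case: e; rewrite /mulM /= ?addr0 //. congr pair; ring.
Qed.

Local Notation "u ~~~ v" := (rel_eq (Q4n_rels n) u v) (at level 70).
Local Notation m := (n.*2).

Lemma xs_add k l : xs (k + l) = xs k ++ xs l.
Proof. exact: nseqD. Qed.

Lemma r1 : (xs n ++ [:: yi; yi]) ~~~ [::].
Proof. apply: rel_nil. by rewrite !inE eqxx. Qed.
Lemma r2 : [:: xl; yl; xl; yi] ~~~ [::].
Proof. apply: rel_nil. by rewrite !inE eqxx orbT. Qed.

Lemma yy : [:: yl; yl] ~~~ xs n.
Proof.
symmetry. transitivity ((xs n ++ [:: yi; yi]) ++ [:: yl; yl]).
  rewrite -catA -{1}(cats0 (xs n)). change ((xs n ++ [::]) ~~~ (xs n ++ ([:: yi] ++ [:: yi; inv_letter yi] ++ [:: yl]))).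
  rewrite cancel2 /=. change ((xs n ++ [::]) ~~~ (xs n ++ [:: yi; inv_letter yi])).
  rewrite cancel2; reflexivity.
rewrite r1; reflexivity.
Qed.

Lemma yx : [:: yl; xl] ~~~ [:: xi; yl].
Proof.
transitivity ([:: inv_letter xl; xl] ++ [:: yl; xl] ++ [:: yi; inv_letter yi]).
  rewrite cancel2' cancel2 cats0; reflexivity.
change (([:: xi] ++ [:: xl; yl; xl; yi] ++ [:: yl]) ~~~ [:: xi; yl]).
rewrite r2; reflexivity.
Qed.

Lemma yxk k : (yl :: xs k) ~~~ (nseq k xi ++ [:: yl]).
Proof.
elim: k => [|k IH]; first reflexivity.
change (([:: yl; xl] ++ xs k) ~~~ (xi :: (nseq k xi ++ [:: yl]))).
rewrite yx -IH; reflexivity.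
Qed.

Lemma xm : xs m ~~~ [::].
Proof.
have h1 : (nseq n xi ++ [:: yl]) ~~~ (xs n ++ [:: yl]).
  transitivity (yl :: xs n); first by symmetry; exact: yxk.
  change (([:: yl] ++ xs n) ~~~ (xs n ++ [:: yl])).
  transitivity ([:: yl] ++ [:: yl; yl]); first by rewrite yy; reflexivity.
  change (([:: yl; yl] ++ [:: yl]) ~~~ (xs n ++ [:: yl])).
  rewrite yy; reflexivity.
have h2 := cancel_r h1.
have e : nseq n xi = inv_word (xs n) by rewrite /inv_word map_nseq rev_nseq.
rewrite -addnn xs_add. transitivity (xs n ++ nseq n xi); first by rewrite h2; reflexivity.
rewrite e; exact: inv_word_r.
Qed.
Lemma xmulm q : xs (q * m) ~~~ [::].
Proof.
elim: q => [|q IH]; first reflexivity.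
rewrite mulSn xs_add xm IH; reflexivity.
Qed.

Lemma xmod k : xs k ~~~ xs (k %% m).
Proof.
rewrite {1}(divn_eq k m) xs_add xmulm; reflexivity.
Qed.

Lemma xeq k l : (k%:R : Z) = l%:R -> xs k ~~~ xs l.
Proof.
move=> /(congr1 (@nat_of_ord _)). rewrite !val_Zp_nat ?m_gt1 // => e.
rewrite xmod e -xmod; reflexivity.
Qed.

Lemma xeqz k (z : Z) : k%:R = z -> xs k ~~~ xs (val z).
Proof. move=> e; apply: xeq. by rewrite natr_Zp. Qed.

Lemma m_pos : (0 < m)%N. Proof. exact: ltn_trans m_gt1. Qed.

Lemma nm1 : ((m.-1)%:R : Z) = -1.
Proof.
apply/eqP; rewrite -subr_eq0 opprK -mulrSr prednK ?m_pos //.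
by rewrite pchar_Zp ?m_gt1.
Qed.

Lemma xinv : [:: xi] ~~~ xs m.-1.
Proof.
transitivity ([:: xi] ++ xs m); first by rewrite xm cats0; reflexivity.
rewrite -(prednK m_pos).
change (([:: inv_letter xl; xl] ++ xs m.-1) ~~~ xs m.-1).
rewrite cancel2'; reflexivity.
Qed.

Lemma xik k : nseq k xi ~~~ xs (k * m.-1).
Proof.
elim: k => [|k IH]; first reflexivity.
change (([:: xi] ++ nseq k xi) ~~~ xs (k.+1 * m.-1)).
rewrite xinv IH -xs_add mulSn; reflexivity.
Qed.

Lemma step_x p : (xl :: nf p) ~~~ nf (mulM XM p).
Proof.
case: p => i e; rewrite /nf /mulM /=.
change ((xs (val i).+1 ++ (if e then [:: yl] else [::])) ~~~
   (xs (val (1 + i + 0)) ++ (if e then [:: yl] else [::]))).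
apply: cat_proper; last reflexivity.
apply: xeqz. by rewrite mulrS natr_Zp addr0.
Qed.

Lemma step_xi p : (xi :: nf p) ~~~ nf (mulM (invM XM) p).
Proof.
case: p => i e; rewrite /nf /mulM /=.
change (([:: xi] ++ xs (val i) ++ (if e then [:: yl] else [::])) ~~~
   (xs (val (- 1 + i + 0)) ++ (if e then [:: yl] else [::]))).
rewrite xinv catA -xs_add.
apply: cat_proper; last reflexivity.
apply: xeqz. by rewrite natrD nm1 natr_Zp addr0.
Qed.

Lemma step_y p : (yl :: nf p) ~~~ nf (mulM YM p).
Proof.
case: p => i [] ; rewrite /nf /mulM.
- change (((yl :: xs (val i)) ++ [:: yl]) ~~~ (xs (val (0 - i + NZ)) ++ [::])).
  rewrite yxk xik -catA. change ((xs (val i * m.-1) ++ [:: yl; yl]) ~~~ (xs (val (0 - i + NZ)) ++ [::])).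
  rewrite yy -xs_add cats0.
  apply: xeqz. rewrite natrD natrM nm1 natr_Zp /NZ. ring.
- change (((yl :: xs (val i)) ++ [::]) ~~~ (xs (val (0 - i + 0)) ++ [:: yl])).
  rewrite cats0 yxk xik.
  apply: cat_proper; last reflexivity.
  apply: xeqz. rewrite natrM nm1 natr_Zp. ring.
Qed.

Lemma yl4 : [:: yl; yl; yl; yl] ~~~ [::].
Proof.
change (([:: yl; yl] ++ [:: yl; yl]) ~~~ [::]).
rewrite yy -xs_add addnn; exact: xm.
Qed.

Lemma yi3 : [:: yi] ~~~ [:: yl; yl; yl].
Proof.
transitivity ([:: yi] ++ [:: yl; yl; yl; yl]); first by rewrite yl4; reflexivity.
change (([:: yi; inv_letter yi] ++ [:: yl; yl; yl]) ~~~ [:: yl; yl; yl]).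
rewrite cancel2; reflexivity.
Qed.

Lemma YYY : mulM (mulM YM YM) YM = invM YM.
Proof. rewrite /mulM /invM /=; congr pair; zsolve. Qed.

Lemma step_yi p : (yi :: nf p) ~~~ nf (mulM (invM YM) p).
Proof.
change (([:: yi] ++ nf p) ~~~ nf (mulM (invM YM) p)).
rewrite yi3 /= (step_y p) (step_y (mulM YM p)) (step_y (mulM YM (mulM YM p))).
rewrite !mulMA YYY; reflexivity.
Qed.

Lemma step a p : (a :: nf p) ~~~ nf (mulM (lv a) p).
Proof.
case: a => [[] []]; [exact: (step_yi p) | exact: (step_y p) | exact: (step_xi p) | exact: (step_x p)].
Qed.

Lemma complete u : u ~~~ nf (ev u).
Proof.
elim: u => [|a u IH]; first by rewrite /nf /= /xs; reflexivity.
rewrite [in X in X ~~~ _]IH step; reflexivity.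
Qed.

Lemma ev_eq u v : ev u = ev v -> u ~~~ v.
Proof. move=> e; rewrite (complete u) (complete v) e; reflexivity. Qed.

Definition powM (p : M) k := iter k (mulM p) oneM.
Definition hom (psi : M -> M) := forall p q, psi (mulM p q) = mulM (psi p) (psi q).
Definition C1 a b := exists psi, [/\ hom psi, psi XM = a & psi YM = b].
Definition C2 a b := exists psi, [/\ hom psi, psi (mulM XM YM) = a & psi YM = b].
Definition gen_by (a b : M) := forall S : M -> Prop, S oneM ->
  (forall p, S p -> [/\ S (mulM a p), S (mulM b p), S (mulM (invM a) p) & S (mulM (invM b) p)]) ->
  forall t, S t.

Lemma addNNc (c x : Z) : x = x + c * (N + N). Proof. by rewrite NN mulr0 addr0. Qed.

Lemma powM_false i k : powM (i, false) k = (k%:R * i, false).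
Proof.
elim: k => [|k IH]; first by rewrite /powM /= mul0r.
rewrite /powM iterS -/(powM _ k) IH /mulM /=; congr pair. rewrite mulrS; ring.
Qed.

Lemma powM_true i k : powM (i, true) k =
  if odd k then (i + (k./2)%:R * N, true) else ((k./2)%:R * N, false).
Proof.
elim: k => [|k IH]; first by rewrite /powM /= mul0r.
rewrite /powM iterS -/(powM _ k) IH /=.
case hk: (odd k) => /=; rewrite /mulM /= uphalf_half hk; congr pair.
- rewrite add1n mulrS. apply: etrans (addNNc (k./2)%:R _) _. ring.
- rewrite add0n. apply: etrans (addNNc (k./2)%:R _) _. ring.
Qed.

Lemma mulNcase k : k%:R * N = 0 \/ k%:R * N = N.
Proof.
elim: k => [|k [IH|IH]]; first by left; rewrite mul0r.
- by right; rewrite mulrS mulrDl IH addr0 mul1r.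
- by left; rewrite mulrS mulrDl IH mul1r NN.
Qed.

Lemma n_pos : (0 < n)%N. Proof. exact: ltn_trans n2. Qed.

Lemma N_neq0 : N != 0.
Proof.
apply/eqP => /(congr1 (@nat_of_ord _)). rewrite /NZ val_Zp_nat ?m_gt1 // modn_small.
  by move=> e; move: n_pos; rewrite e.
by rewrite -addnn -[X in (X < _)%N]addn0 ltn_add2l n_pos.
Qed.

Lemma psiL_hom c d : c * N = N -> hom (fun p => (c * p.1 + (if p.2 then d else 0), p.2)).
Proof.
move=> h [p1 []] [q1 []]; rewrite /mulM /=; congr pair; first [ring | (rewrite !mulrDr h; ring)].
Qed.

Lemma case_ff i j : gen_by (i, false) (j, false) -> False.
Proof.
move=> G. have := G (fun p => p.2 = false) erefl.
have H : forall p : M, p.2 = false -> [/\ (mulM (i,false) p).2 = false, (mulM (j,false) p).2 = false,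
   (mulM (invM (i,false)) p).2 = false & (mulM (invM (j,false)) p).2 = false].
  by move=> p hp; rewrite /mulM /invM /= hp.
by move=> /(_ H YM).
Qed.

Lemma case_ft i j : powM (i, false) n = mulM (j, true) (j, true) -> C1 (i, false) (j, true).
Proof.
rewrite powM_false /mulM => /(congr1 fst) e.
have e' : n%:R * i = j + - j + N := e.
have h : i * N = N by rewrite mulrC /NZ e' addrN add0r.
exists (fun p => (i * p.1 + (if p.2 then j else 0), p.2)); split.
- exact: psiL_hom.
- by rewrite /XM /= mulr1 addr0.
- by rewrite /YM /= mulr0 add0r.
Qed.

Lemma case_tt2 i j : (i - j) * N = N -> C2 (i, true) (j, true).
Proof.
move=> h. exists (fun p => ((i - j) * p.1 + (if p.2 then j else 0), p.2)); split.
- exact: psiL_hom.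
- rewrite /XM /YM /mulM /=; congr pair; ring.
- by rewrite /YM /= mulr0 add0r.
Qed.

Lemma case_tf i j : n != 2%N -> powM (i, true) n = mulM (j, false) (j, false) ->
  gen_by (i, true) (j, false) -> False.
Proof.
move=> n_ne2. rewrite powM_true. case: ifP => _; rewrite /mulM; first by move=> /(congr1 snd).
move=> /(congr1 fst) e0 G. have e : (n./2)%:R * N = j + j + 0 := e0.
have hj : 4%:R * j = 0.
  have -> : 4%:R * j = 2%:R * (j + j + 0) by ring.
  rewrite -e. have -> : (2%:R * ((n./2)%:R * N) : Z) = (n./2)%:R * (N + N) by ring.
  by rewrite NN mulr0.
have h4N : 4%:R * N = 0.
  have -> : (4%:R * N : Z) = 2%:R * (N + N) by ring.
  by rewrite NN mulr0.
suff: (4%:R * XM.1 = if XM.2 then 4%:R * i else 0 :> Z).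
  move=> /=. rewrite mulr1 => /(congr1 (@nat_of_ord _)).
  rewrite val_Zp_nat ?m_gt1 // modn_small //.
  rewrite -addnn. move: n2 n_ne2; case: n => [|[|[|k]]] //= _ _.
  by rewrite !addSn !addnS.
apply: (G (fun p => 4%:R * p.1 = if p.2 then 4%:R * i else 0)).
- by rewrite /= mulr0.
- move=> [t []] /= hp; split; rewrite /mulM /invM /= ?mulrDr ?mulrN ?hp ?hj ?h4N; ring.
Qed.

Lemma case_tt i j : powM (i, true) n = mulM (j, true) (j, true) ->
  gen_by (i, true) (j, true) -> (i - j) * N = N /\ (n %% 4 == 2)%N.
Proof.
rewrite powM_true. case: ifP => hodd; rewrite /mulM; first by move=> /(congr1 snd).
move=> /(congr1 fst) e0 G. have e : (n./2)%:R * N = j + - j + N := e0.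
have e' : (n./2)%:R * N = N by rewrite e addrN add0r.
have hn : n = (n./2).*2 by rewrite -{1}(odd_double_half n) hodd add0n.
split; last first.
  case hh : (odd (n./2)).
    have e1 := odd_double_half (n./2). have e2 := odd_double_half n.
    rewrite hh hodd -!muln2 /= in e1 e2. apply/eqP.
    move: e1 e2; set h := n./2; set g := h./2 => e1 e2. lia.
  exfalso. move: e'. rewrite -{1}(odd_double_half (n./2)) hh add0n -(addnn (n./2./2)) natrD mulrDl.
  rewrite -mulrDr NN mulr0 => /esym/eqP; by rewrite (negbTE N_neq0).
have hNN : N * N = 0.
  rewrite {1}/NZ. have -> : (n%:R : Z) = ((n./2) + (n./2))%:R by rewrite addnn -hn.
  by rewrite natrD mulrDl -mulrDr NN mulr0.
have [h|h] := mulNcase (val (i - j)); rewrite natr_Zp in h; last by [].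
have hi : i * N = j * N by apply/eqP; rewrite -subr_eq0 -mulrBl h.
suff: (XM.1 * N = if XM.2 then j * N else 0).
  move=> /=. rewrite mul1r => /eqP; by rewrite (negbTE N_neq0).
apply: (G (fun p => p.1 * N = if p.2 then j * N else 0)).
- by rewrite /= mul0r.
- move=> [t []] /= hp; split; rewrite /mulM /invM /= ?mulrDl ?mulNr ?hp ?hi ?hNN; ring.
Qed.

End Model.

Definition psi2 (a b : M 2) (p : M 2) : M 2 :=
  mulM (powM a (val p.1)) (if p.2 then b else oneM 2).

Definition elems : seq (M 2) :=
  [seq (x, e) | x <- [:: @Ordinal 4 0 erefl; @Ordinal 4 1 erefl; @Ordinal 4 2 erefl; @Ordinal 4 3 erefl],
                e <- [:: false; true]].

Lemma mem_elems (p : M 2) : p \in elems.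
Proof.
case: p => [[k hk] e]; move: hk.
by do 4? case: k => [|k]; case: e.
Qed.

Definition cond2 (a b : M 2) : bool :=
  a.2 && (((~~ b.2) && (mulM b b == (NZ 2, false))) || (b.2 && ((a.1 - b.1) * NZ 2 == NZ 2))).

Definition good2 (a b : M 2) : bool :=
  all (fun p => all (fun q => psi2 a b (mulM p q) == mulM (psi2 a b p) (psi2 a b q)) elems) elems
   && (psi2 a b (XM 2) == a) && (psi2 a b (YM 2) == b).

Lemma comp2_bool : all (fun a => all (fun b => cond2 a b ==> good2 a b) elems) elems.
Proof. vm_compute. reflexivity. Qed.

Lemma comp2 (a b : M 2) : cond2 a b -> C1 a b.
Proof.
move=> hc.
have := allP comp2_bool a (mem_elems a) => /allP /(_ b (mem_elems b)) /implyP /(_ hc).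
case/andP => /andP [hh hx] hy.
exists (psi2 a b); split; [move=> p q; apply/eqP | exact/eqP | exact/eqP].
exact: (allP (allP hh p (mem_elems p)) q (mem_elems q)).
Qed.

Lemma classify n (n2 : (2 <= n)%N) (a b : M n) :
  powM a n = mulM b b -> gen_by a b ->
  C1 a b \/ (C2 a b /\ (n %% 4 == 2)%N /\ n != 2%N).
Proof.
case: a b => [i []] [j []] Hab G.
- have [h1 h2] := case_tt n2 Hab G. case: (eqVneq n 2%N) => [e|ne].
  + left. subst n. apply: comp2. apply/andP; split=> //; apply/orP; right; apply/andP; split=> //; apply/eqP; exact: h1.
  + right. split; [exact: case_tt2 | by split].
- case: (eqVneq n 2%N) => [e|ne].
  + left. subst n. apply: comp2.
    have e2 : mulM (j, false) (j, false) = (NZ 2, false) by rewrite -Hab (powM_true n2) mul1r.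
    apply/andP; split=> //; apply/orP; left; apply/andP; split=> //; apply/eqP; exact: e2.
  + exfalso. exact: (@case_tf n n2 i j ne Hab G).
- left; exact: case_ft Hab.
- exfalso; exact: case_ff G.
Qed.

Lemma surj_inj (T : finType) (g : T -> T) : (forall y, exists x, g x = y) -> injective g.
Proof.
move=> hs.
pose h y := odflt y [pick x | g x == y].
have gh y : g (h y) = y.
  rewrite /h; case: pickP => [x /eqP //|none].
  have [x hx] := hs y. by move: (none x); rewrite hx eqxx.
have hinj : injective h by apply: (can_inj gh).
have [h' hh' h'h] := injF_bij hinj.
have e x : g x = h' x by rewrite -{1}(h'h x) gh.
move=> x1 x2; rewrite !e => /(congr1 h); by rewrite !h'h.
Qed.

Section Phi.
Variable n : nat.
Hypothesis n2 : (2 <= n)%N.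
Variable R : word.
Variable f : word -> word.
Local Notation P := (P_rels n R).
Local Notation Q := (Q4n_rels n).
Hypothesis hf1 : forall u v, rel_eq P u v -> rel_eq Q (f u) (f v).
Hypothesis hf2 : forall u v, rel_eq Q (f (u ++ v)) (f u ++ f v).
Hypothesis hf3 : forall u v, rel_eq Q (f u) (f v) -> rel_eq P u v.
Hypothesis hf4 : forall w, exists u, rel_eq Q (f u) w.

Definition phi w : M n := ev n (f w).

Lemma idem (p : M n) : p = mulM p p -> p = oneM n.
Proof. move=> h. have := congr1 (mulM (invM p)) h. by rewrite (mulMA n2) !(mulVM n2) mul1M => ->. Qed.

Lemma inv_uniq (p q : M n) : mulM p q = oneM n -> q = invM p.
Proof. move=> h. by rewrite -[q]mul1M -(mulVM n2 p) -(mulMA n2) h mulM1. Qed.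

Lemma inv_uniq' (p q : M n) : mulM p q = oneM n -> p = invM q.
Proof. move=> h. by rewrite -[p]mulM1 -(mulMV q) (mulMA n2) h mul1M. Qed.

Lemma phi_wd u v : rel_eq P u v -> phi u = phi v.
Proof. move=> h; rewrite /phi; exact: (sound n2 (hf1 h)). Qed.

Lemma phi_cat u v : phi (u ++ v) = mulM (phi u) (phi v).
Proof. by rewrite /phi (sound n2 (hf2 u v)) (ev_cat n2). Qed.

Lemma phi_nil : phi [::] = oneM n.
Proof. apply: idem. exact: (phi_cat [::] [::]). Qed.

Lemma phi_inj u v : phi u = phi v -> rel_eq P u v.
Proof. move=> e; apply: hf3; exact: (ev_eq n2 e). Qed.

Lemma phi_surj t : exists u, phi u = t.
Proof.
have [u hu] := hf4 (nf t). exists u. by rewrite /phi (sound n2 hu) (ev_nf n2).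
Qed.

Lemma phi_inv1 b : phi [:: (b, true)] = invM (phi [:: (b, false)]).
Proof.
apply: inv_uniq. rewrite -phi_cat -phi_nil. apply: phi_wd.
exact: (cancel2 P (b, false)).
Qed.

Lemma phi_gen_by : gen_by (phi gx) (phi gy).
Proof.
move=> S S1 HS t. have [u <-] := phi_surj t.
elim: u => [|c u IH]; first by rewrite phi_nil.
change (S (phi ([:: c] ++ u))); rewrite phi_cat.
have [h1 h2 h3 h4] := HS _ IH.
case: c => [[] []]; rewrite ?phi_inv1 //.
Qed.

Lemma phi_xs k : phi (xs k) = powM (phi gx) k.
Proof.
elim: k => [|k IH]; first exact: phi_nil.
change (phi ([:: xl] ++ xs k) = mulM (phi gx) (powM (phi gx) k)).
by rewrite phi_cat IH.
Qed.

Lemma phi_rel : powM (phi gx) n = mulM (phi gy) (phi gy).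
Proof.
have h : phi (rel_xn_ym2 n) = oneM n.
  rewrite -phi_nil; apply: phi_wd; apply: rel_nil; exact: mem_head.
move: h. change (phi (xs n ++ ([:: (true, true)] ++ [:: (true, true)])) = oneM n -> 
  powM (phi gx) n = mulM (phi gy) (phi gy)).
rewrite !phi_cat phi_xs !phi_inv1 => /inv_uniq' ->.
by rewrite (invM_mul n2) !(invMK n2).
Qed.

Lemma key (s : bool -> word) (psi : M n -> M n) : hom psi ->
  psi (ev n (s false)) = phi gx -> psi (ev n (s true)) = phi gy -> induces_iso P Q s.
Proof.
move=> hh h0 h1.
have psi1 : psi (oneM n) = oneM n by apply: idem; rewrite -hh mulM1.
have psiV p : psi (invM p) = invM (psi p) by apply: inv_uniq; rewrite -hh mulMV psi1.
have phis w : phi w = psi (ev n (subst s w)).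
  elim: w => [|[b e] w IH]; first by rewrite phi_nil /= psi1.
  change (phi ([:: (b, e)] ++ w) = psi (ev n ((if e then inv_word (s b) else s b) ++ subst s w))).
  rewrite phi_cat (ev_cat n2) hh -IH. congr mulM.
  case: e.
  - rewrite phi_inv1 (ev_inv n2) psiV. by case: b; rewrite ?h0 ?h1.
  - by case: b; rewrite ?h0 ?h1.
have psurj t : exists p, psi p = t.
  have [u hu] := phi_surj t. exists (ev n (subst s u)). by rewrite -phis.
have pinj : injective psi := @surj_inj ('Z_(n.*2) * bool)%type psi psurj.
split.
- move=> u v /phi_wd; rewrite !phis => /pinj e; exact: (ev_eq n2 e).
- move=> u v /(sound n2) => e; apply: phi_inj; by rewrite !phis e.
- move=> w; have [u hu] := phi_surj (psi (ev n w)); exists u.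
  have e : ev n (subst s u) = ev n w by apply: pinj; rewrite -phis.
  exact: (ev_eq n2 e).
Qed.

Lemma main_phi :
  (induces_iso P Q s_id \/ induces_iso P Q s_xy) /\
  ((n == 2) || (n %% 4 != 2) -> induces_iso P Q s_id)%N.
Proof.
have [[psi [hh ha hb]] | [[psi [hh ha hb]] [h4 hn2]]] := classify n2 phi_rel phi_gen_by.
- have hi : induces_iso P Q s_id.
    apply: (key hh); by rewrite /= ?mulM1 // ?ha ?hb.
  by split; [left|].
- split.
  + right. apply: (key hh); by rewrite /= ?mulM1 // ?ha ?hb.
  + by rewrite h4 (negbTE hn2).
Qed.
End Phi.

Local Close Scope ring_scope.

Theorem lemma3p14 (n : nat) (R : word) :
  2 <= n ->
  pres_iso (P_rels n R) (Q4n_rels n) ->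
  (induces_iso (P_rels n R) (Q4n_rels n) s_id \/
   induces_iso (P_rels n R) (Q4n_rels n) s_xy) /\
  ((n == 2) || (n %% 4 != 2) -> induces_iso (P_rels n R) (Q4n_rels n) s_id).
Proof.
move=> n2 [f [hf1 hf2 hf3 hf4]].
exact: (@main_phi n n2 R f hf1 hf2 hf3 hf4).
Qed.
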